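(* Let $\langle D,E,e,\varepsilon\rangle$ be a restricted Priestley duality between a variety $\mathcal A$ and a category $\mathcal X$ (with underlying-Priestley-space functor ${}^\flat\colon\mathcal X\to\mathcal P$). Let $\mathcal B$ be a finite set of finite algebras from $\mathcal A$ and let $\mathcal Y=\{D(\mathbf A)\mid \mathbf A\in\mathcal B\}$. Then the following are equivalent: (1) the algebras in $\mathcal B$ are quasi-primal and share a common ternary discriminator term; (2) for all $\mathbb X_1,\mathbb X_2\in\mathcal Y$, for each $\mathbb Y\in\mathcal X$ and every pair $\phi_1\colon\mathbb X_1\to\mathbb Y$, $\phi_2\colon\mathbb X_2\to\mathbb Y$ of jointly $\mathcal P$-surjective morphisms of $\mathcal X$, either $\mathbb Y^\flat=\phi_1^\flat(\mathbb X_1^\flat)\,\dot\cup\,\phi_2^\flat(\mathbb X_2^\flat)$, or both $\phi_1$ and $\phi_2$ are $\mathcal P$-surjective.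
   Context: $\mathcal D$ denotes the category of bounded distributive lattices (with bound-preserving lattice homomorphisms) and $\mathcal P$ the category of Priestley spaces (with continuous order-preserving maps). $\mathbf 2$ is the two-element bounded lattice and $\mathbbm 2$ the discretely topologised two-element chain. Priestley duality: $H\colon\mathcal D\to\mathcal P$, $H(\mathbf L)=\mathcal D(\mathbf L,\mathbf 2)$ with order and topology inherited from $\mathbbm 2^L$; $K\colon\mathcal P\to\mathcal D$, $K(\mathbb X)=\mathcal P(\mathbb X,\mathbbm 2)$ with operations inherited pointwise; on morphisms both act by precomposition; the unit $e_{\mathbf L}\colon\mathbf L\to KH(\mathbf L)$ and counit $\varepsilon_{\mathbb X}\colon\mathbb X\to HK(\mathbb X)$ are evaluation maps. A restricted Priestley duality: $\mathcal A$ is a variety of algebras with a term reduct in $\mathcal D$, ${}^\flat\colon\mathcal A\to\mathcal D$ the forgetful functor; $\mathcal X$ is a category with a functor ${}^\flat\colon\mathcal X\to\mathcal P$; $D\colon\mathcal A\to\mathcal X$ and $E\colon\mathcal X\to\mathcal A$ form a dual equivalence with unit $e\colon \mathrm{id}_{\mathcal A}\to ED$ and counit $\varepsilon\colon\mathrm{id}_{\mathcal X}\to DE$, such that ${}^\flat\circ D=H\circ{}^\flat$ and ${}^\flat\circ E=K\circ{}^\flat$ as functors, and $e_{\mathbf A}^\flat=e_{\mathbf A^\flat}$, $\varepsilon_{\mathbb X}^\flat=\varepsilon_{\mathbb X^\flat}$ for all $\mathbf A\in\mathcal A$, $\mathbb X\in\mathcal X$. A morphism $\phi$ of $\mathcal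 X$ is $\mathcal P$-surjective if $\phi^\flat$ is surjective; two morphisms $\phi_1\colon\mathbb X_1\to\mathbb Y$, $\phi_2\colon\mathbb X_2\to\mathbb Y$ are jointly $\mathcal P$-surjective if $\phi_1^\flat(\mathbb X_1^\flat)\cup\phi_2^\flat(\mathbb X_2^\flat)$ is the whole of $\mathbb Y^\flat$. The notation $\mathbb Y^\flat=\phi_1^\flat(\mathbb X_1^\flat)\,\dot\cup\,\phi_2^\flat(\mathbb X_2^\flat)$ means $\mathbb Y^\flat$ is the disjoint union of these two images as ordered spaces: they are disjoint, cover $\mathbb Y^\flat$, and no element of one is comparable with an element of the other. The ternary discriminator on a set $A$ is $\tau(x,y,z)=x$ if $x\ne y$ and $\tau(x,y,z)=z$ if $x=y$. A finite algebra is quasi-primal if the ternary discriminator is a term function of it; a family of algebras shares a common ternary discriminator term if there is a single ternary term $t$ with $t^{\mathbf A}$ the ternary discriminator on $A$ for each member $\mathbf A$. *)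

(* Defs.v *)
From Stdlib Require Import List FunctionalExtensionality.
From mathcomp Require Import all_boot.

Record category := Category {
  Ob : Type;
  Hom : Ob -> Ob -> Type;
  idm : forall a : Ob, Hom a a;
  comp : forall a b c : Ob, Hom b c -> Hom a b -> Hom a c }.
Arguments Hom {_} _ _.
Arguments idm {_} a.
Arguments comp {_ _ _ _} _ _.

Definition is_category (C : category) : Prop :=
  (forall (a b : Ob C) (f : Hom a b), comp (idm b) f = f) /\
  (forall (a b : Ob C) (f : Hom a b), comp f (idm a) = f) /\
  (forall (a b c d : Ob C) (f : Hom a b) (g : Hom b c) (h : Hom c d),
      comp h (comp g f) = comp (comp h g) f).

Record signature := Signature { op : Type; arity : op -> nat }.

Record algebra (S : signature) := Algebra {
  car : Type;
  opr : forall o : op S, ('I_(arity S o) -> car) -> car }.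
Arguments car {S} a.
Arguments opr {S} a o _.

Inductive term (S : signature) (n : nat) : Type :=
| Var : 'I_n -> term S n
| App : forall o : op S, ('I_(arity S o) -> term S n) -> term S n.
Arguments Var {S n} _.
Arguments App {S n} o _.

Fixpoint eval {S : signature} (A : algebra S) {n : nat} (env : 'I_n -> car A)
  (t : term S n) : car A :=
  match t with
  | Var i => env i
  | App o args => opr A o (fun j => eval A env (args j))
  end.

Definition env0 (T : Type) : 'I_0 -> T.
Proof. by case. Defined.
Definition env2 {T : Type} (x y : T) : 'I_2 -> T :=
  fun i => if nat_of_ord i == 0 then x else y.
Definition env3 {T : Type} (x y z : T) : 'I_3 -> T :=
  fun i => if nat_of_ord i == 0 then x else if nat_of_ord i == 1 then y else z.

Definition satisfies {S} (A : algebra S) {n} (l r : term S n) : Prop :=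
  forall env : 'I_n -> car A, eval A env l = eval A env r.

(* a variety = an equational class (Birkhoff) *)
Definition is_variety {S} (V : algebra S -> Prop) : Prop :=
  exists Id : forall n : nat, term S n -> term S n -> Prop,
    forall A : algebra S, V A <-> (forall n l r, Id n l r -> satisfies A l r).

Definition is_hom {S} (A B : algebra S) (f : car A -> car B) : Prop :=
  forall o args, f (opr A o args) = opr B o (fun j => f (args j)).

Definition finite_alg {S} (A : algebra S) : Prop :=
  exists s : list (car A), forall x, In x s.

Definition is_discriminator {S} (A : algebra S) (t : term S 3) : Prop :=
  forall x y z : car A,
    (x = y -> eval A (env3 x y z) t = z) /\ (x <> y -> eval A (env3 x y z) t = x).

Definition quasi_primal {S} (A : algebra S) : Prop :=
  finite_alg A /\ exists t : term S 3, is_discriminator A t.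

Record rawDL := RawDL {
  dcar : Type;
  dmeet : dcar -> dcar -> dcar;
  djoin : dcar -> dcar -> dcar;
  dbot : dcar;
  dtop : dcar }.
Arguments dmeet r _ _.
Arguments djoin r _ _.
Arguments dbot r.
Arguments dtop r.

Definition is_bdl (L : rawDL) : Prop :=
  (forall x y z, dmeet L x (dmeet L y z) = dmeet L (dmeet L x y) z) /\
  (forall x y z, djoin L x (djoin L y z) = djoin L (djoin L x y) z) /\
  (forall x y, dmeet L x y = dmeet L y x) /\
  (forall x y, djoin L x y = djoin L y x) /\
  (forall x y, dmeet L x (djoin L x y) = x) /\
  (forall x y, djoin L x (dmeet L x y) = x) /\
  (forall x y z, dmeet L x (djoin L y z) = djoin L (dmeet L x y) (dmeet L x z)) /\
  (forall x, dmeet L x (dtop L) = x) /\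
  (forall x, djoin L x (dbot L) = x).

Definition is_dlhom (L M : rawDL) (f : dcar L -> dcar M) : Prop :=
  (forall x y, f (dmeet L x y) = dmeet M (f x) (f y)) /\
  (forall x y, f (djoin L x y) = djoin M (f x) (f y)) /\
  f (dbot L) = dbot M /\ f (dtop L) = dtop M.

Definition dl2 : rawDL := @RawDL bool andb orb false true.

Record lattice_terms (S : signature) := LatticeTerms {
  tmeet : term S 2; tjoin : term S 2; tbot : term S 0; ttop : term S 0 }.
Arguments tmeet {S} l.
Arguments tjoin {S} l.
Arguments tbot {S} l.
Arguments ttop {S} l.

(* the forgetful functor ^flat : A -> D on objects *)
Definition reduct {S} (lt : lattice_terms S) (A : algebra S) : rawDL :=
  @RawDL (car A)
    (fun x y => eval A (env2 x y) (tmeet lt))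
    (fun x y => eval A (env2 x y) (tjoin lt))
    (eval A (env0 (car A)) (tbot lt))
    (eval A (env0 (car A)) (ttop lt)).

Lemma eval_hom {S} (A B : algebra S) (f : car A -> car B) n (env : 'I_n -> car A)
  (t : term S n) : is_hom A B f -> f (eval A env t) = eval B (fun i => f (env i)) t.
Proof.
move=> hf; elim: t => [i|o args IH] //=.
rewrite hf; congr (opr B o _); apply: functional_extensionality => j; exact: IH.
Qed.
Arguments eval_hom {S A B f n env t} _.

Lemma hom_reduct {S} (lt : lattice_terms S) (A B : algebra S) (f : car A -> car B) :
  is_hom A B f -> is_dlhom (reduct lt A) (reduct lt B) f.
Proof.
move=> hf.
have e2 : forall x y, (fun i => f (env2 x y i)) = env2 (f x) (f y).
  by move=> x y; apply: functional_extensionality => i; rewrite /env2; case: ifP.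
have e0 : (fun i => f (env0 (car A) i)) = env0 (car B).
  by apply: functional_extensionality; case.
rewrite /is_dlhom /=; split; [|split; [|split]].
- by move=> x y; rewrite (eval_hom hf) e2.
- by move=> x y; rewrite (eval_hom hf) e2.
- by rewrite (eval_hom hf) e0.
- by rewrite (eval_hom hf) e0.
Qed.
Arguments hom_reduct {S} lt {A B f} _.

Record tspace := TSpace {
  pt : Type;
  ple : pt -> pt -> Prop;
  popen : (pt -> Prop) -> Prop;
  popen_setT : popen (fun _ => True);
  popen_I : forall U W, popen U -> popen W -> popen (fun x => U x /\ W x);
  popen_local : forall U,
    (forall x, U x -> exists W, popen W /\ W x /\ (forall y, W y -> U y)) ->
    popen U }.
Arguments ple _ _ _.
Arguments popen _ _.

Definition is_poset (X : tspace) : Prop :=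
  (forall x, ple X x x) /\
  (forall x y, ple X x y -> ple X y x -> x = y) /\
  (forall x y z, ple X x y -> ple X y z -> ple X x z).

Definition compact (X : tspace) : Prop :=
  forall F : (pt X -> Prop) -> Prop,
    (forall U, F U -> popen X U) -> (forall x, exists U, F U /\ U x) ->
    exists s : list (pt X -> Prop),
      (forall U, In U s -> F U) /\ (forall x, exists U, In U s /\ U x).

Definition clopen (X : tspace) (U : pt X -> Prop) : Prop :=
  popen X U /\ popen X (fun x => ~ U x).

Definition upset (X : tspace) (U : pt X -> Prop) : Prop :=
  forall x y, U x -> ple X x y -> U y.

Definition is_priestley (X : tspace) : Prop :=
  is_poset X /\ compact X /\
  (forall x y, ~ ple X x y ->
     exists U, clopen X U /\ upset X U /\ U x /\ ~ U y).

Definition continuous (X Y : tspace) (f : pt X -> pt Y) : Prop :=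
  forall V, popen Y V -> popen X (fun x => V (f x)).
Definition monotone (X Y : tspace) (f : pt X -> pt Y) : Prop :=
  forall x y, ple X x y -> ple Y (f x) (f y).
Definition pmorph (X Y : tspace) (f : pt X -> pt Y) : Prop :=
  continuous X Y f /\ monotone X Y f.

Definition two : tspace :=
  @TSpace bool (fun a b => implb a b = true) (fun _ => True) I
    (fun _ _ _ _ => I) (fun _ _ => I).

Definition Kcar (X : tspace) : Type := {f : pt X -> bool | pmorph X two f}.

Lemma pmorph_bin (X : tspace) (op2 : bool -> bool -> bool)
  (mop : forall a b c d, implb a b -> implb c d -> implb (op2 a c) (op2 b d))
  (f g : pt X -> bool) :
  pmorph X two f -> pmorph X two g -> pmorph X two (fun x => op2 (f x) (g x)).
Proof.
move=> [cf mf] [cg mg]; split.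
- move=> V _; apply: popen_local => x Vx.
  exists (fun y => f y = f x /\ g y = g x); split; last split => //.
  + apply: popen_I; [exact: (cf (fun b => b = f x) I) | exact: (cg (fun b => b = g x) I)].
  + by move=> y [-> ->].
- by move=> x y le; apply: mop; [exact: mf | exact: mg].
Qed.
Arguments pmorph_bin {X op2} mop {f g} _ _.

Lemma pmorph_const (X : tspace) (b : bool) : pmorph X two (fun _ => b).
Proof.
split.
- move=> V _; apply: popen_local => x Vb.
  by exists (fun _ => True); split; [exact: popen_setT | split].
- by move=> x y _; case: b.
Qed.

Lemma mop_and a b c d : implb a b -> implb c d -> implb (a && c) (b && d).
Proof. by case: a; case: b; case: c; case: d. Qed.
Lemma mop_or a b c d : implb a b -> implb c d -> implb (a || c) (b || d).
Proof. by case: a; case: b; case: c; case: d. Qed.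

Definition rawK (X : tspace) : rawDL :=
  @RawDL (Kcar X)
    (fun f g => exist _ (fun x => sval f x && sval g x)
                  (pmorph_bin mop_and (svalP f) (svalP g)))
    (fun f g => exist _ (fun x => sval f x || sval g x)
                  (pmorph_bin mop_or (svalP f) (svalP g)))
    (exist _ (fun _ => false) (pmorph_const X false))
    (exist _ (fun _ => true) (pmorph_const X true)).

Lemma pmorph_comp (X Y Z : tspace) (f : pt X -> pt Y) (g : pt Y -> pt Z) :
  pmorph X Y f -> pmorph Y Z g -> pmorph X Z (fun x => g (f x)).
Proof.
move=> [cf mf] [cg mg]; split.
- by move=> V oV; exact: (cf _ (cg V oV)).
- by move=> x y le; apply: mg; apply: mf.
Qed.
Arguments pmorph_comp {X Y Z f g} _ _.

Definition Kmap (X Y : tspace) (f : pt X -> pt Y) (hf : pmorph X Y f) :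
  Kcar Y -> Kcar X :=
  fun g => exist _ (fun x => sval g (f x)) (pmorph_comp hf (svalP g)).
Arguments Kmap {X Y f} hf _.

Definition Hcar (L : rawDL) : Type := {x : dcar L -> bool | is_dlhom L dl2 x}.

(* basic open sets of the topology inherited from the product 2^L *)
Definition Hbasic (L : rawDL) (s : list (dcar L * bool)) (x : Hcar L) : Prop :=
  Forall (fun p => sval x (fst p) = snd p) s.
Arguments Hbasic {L} s x.

Definition Hopen (L : rawDL) (U : Hcar L -> Prop) : Prop :=
  forall x, U x -> exists s, Hbasic s x /\ (forall y, Hbasic s y -> U y).

Lemma Hopen_setT L : Hopen L (fun _ => True).
Proof. by move=> x _; exists nil; split => //; constructor. Qed.

Lemma Hopen_I L U W : Hopen L U -> Hopen L W -> Hopen L (fun x => U x /\ W x).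
Proof.
move=> oU oW x [Ux Wx].
have [s1 [b1 h1]] := oU x Ux; have [s2 [b2 h2]] := oW x Wx.
exists (List.app s1 s2); split.
- by apply/Forall_app.
- by move=> y /Forall_app [y1 y2]; split; [exact: h1 | exact: h2].
Qed.

Lemma Hopen_local L U :
  (forall x, U x -> exists W, Hopen L W /\ W x /\ (forall y, W y -> U y)) ->
  Hopen L U.
Proof.
move=> h x Ux; have [W [oW [Wx WU]]] := h x Ux.
have [s [bs hs]] := oW x Wx; exists s; split => // y /hs; exact: WU.
Qed.

Definition rawH (L : rawDL) : tspace :=
  @TSpace (Hcar L) (fun x y => forall a, implb (sval x a) (sval y a) = true)
    (Hopen L) (Hopen_setT L) (@Hopen_I L) (@Hopen_local L).

Lemma dlhom_comp (L M N : rawDL) (f : dcar L -> dcar M) (g : dcar M -> dcar N) :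
  is_dlhom L M f -> is_dlhom M N g -> is_dlhom L N (fun a => g (f a)).
Proof.
move=> [f1 [f2 [f3 f4]]] [g1 [g2 [g3 g4]]]; split; [|split; [|split]].
- by move=> x y; rewrite f1 g1.
- by move=> x y; rewrite f2 g2.
- by rewrite f3 g3.
- by rewrite f4 g4.
Qed.
Arguments dlhom_comp {L M N f g} _ _.

Definition Hmap (L M : rawDL) (f : dcar L -> dcar M) (hf : is_dlhom L M f) :
  Hcar M -> Hcar L :=
  fun x => exist _ (fun a => sval x (f a)) (dlhom_comp hf (svalP x)).
Arguments Hmap {L M f} hf _.

Lemma ev_pmorph (L : rawDL) (a : dcar L) :
  pmorph (rawH L) two (fun x : Hcar L => sval x a).
Proof.
split.
- move=> V _ x Vx; exists ((a, sval x a) :: nil); split.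
  + by constructor.
  + by move=> y hy; inversion hy; subst; simpl in *; rewrite H1.
- by move=> x y le; exact: le.
Qed.
Arguments ev_pmorph {L} a.

Definition evK (L : rawDL) : dcar L -> Kcar (rawH L) :=
  fun a => exist _ (fun x : Hcar L => sval x a) (ev_pmorph a).

Lemma ev_dlhom (X : tspace) (x : pt X) :
  is_dlhom (rawK X) dl2 (fun g : Kcar X => sval g x).
Proof. by split; [|split; [|split]]. Qed.
Arguments ev_dlhom {X} x.

Definition evH (X : tspace) : pt X -> Hcar (rawK X) :=
  fun x => exist _ (fun g : Kcar X => sval g x) (ev_dlhom x).

Definition objA {S} (V : algebra S -> Prop) : Type := {A : algebra S | V A}.

Definition homA {S} {V : algebra S -> Prop} (A B : objA V) : Type :=
  {f : car (sval A) -> car (sval B) | is_hom (sval A) (sval B) f}.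

Lemma is_hom_id {S} (A : algebra S) : is_hom A A (fun x => x).
Proof. by []. Qed.

Lemma is_hom_comp {S} (A B C : algebra S) f g :
  is_hom A B f -> is_hom B C g -> is_hom A C (fun x => g (f x)).
Proof. by move=> hf hg o args; rewrite hf hg. Qed.
Arguments is_hom_comp {S A B C f g} _ _.

Definition idA {S} {V : algebra S -> Prop} (A : objA V) : homA A A :=
  exist _ (fun x => x) (is_hom_id (sval A)).

Definition compA {S} {V : algebra S -> Prop} {A B C : objA V}
  (g : homA B C) (f : homA A B) : homA A C :=
  exist _ (fun x => sval g (sval f x)) (is_hom_comp (svalP f) (svalP g)).

Record pfunctor (C : category) := PFunctor {
  fobj : Ob C -> tspace;
  fhom : forall a b : Ob C, Hom a b -> pt (fobj a) -> pt (fobj b);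
  fhom_pm : forall (a b : Ob C) (f : Hom a b), pmorph (fobj a) (fobj b) (fhom a b f) }.
Arguments fobj {C} p _.
Arguments fhom {C} p {a b} _ _.
Arguments fhom_pm {C} p {a b} f.

Definition is_pfunctor (C : category) (F : pfunctor C) : Prop :=
  (forall a, is_priestley (fobj F a)) /\
  (forall a x, fhom F (idm a) x = x) /\
  (forall (a b c : Ob C) (g : Hom b c) (f : Hom a b) x,
      fhom F (comp g f) x = fhom F g (fhom F f x)).
Arguments is_pfunctor {C} F.

Record rpd_data {S} (V : algebra S -> Prop) := RPD {
  Xcat : category;
  flat : pfunctor Xcat;
  Dobj : objA V -> Ob Xcat;
  Dhom : forall A B : objA V, homA A B -> @Hom Xcat (Dobj B) (Dobj A);
  Eobj : Ob Xcat -> objA V;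
  Ehom : forall x y : Ob Xcat, Hom x y -> homA (Eobj y) (Eobj x);
  unit : forall A : objA V, homA A (Eobj (Dobj A));
  counit : forall x : Ob Xcat, Hom x (Dobj (Eobj x)) }.
Arguments Xcat {S V} r.
Arguments flat {S V} r.
Arguments Dobj {S V} r _.
Arguments Dhom {S V} r {A B} _.
Arguments Eobj {S V} r _.
Arguments Ehom {S V} r {x y} _.
Arguments unit {S V} r A.
Arguments counit {S V} r x.

Definition tmap (p : tspace * tspace) : Type := pt (fst p) -> pt (snd p).
Definition dmap (p : rawDL * rawDL) : Type := dcar (fst p) -> dcar (snd p).

Definition is_rpd {S} {V : algebra S -> Prop} (lt : lattice_terms S)
  (R : rpd_data V) : Prop :=
  is_category (Xcat R) /\ is_pfunctor (flat R) /\
  (forall A, Dhom R (idA A) = idm (Dobj R A)) /\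
  (forall (A B C : objA V) (f : homA A B) (g : homA B C),
      Dhom R (compA g f) = comp (Dhom R f) (Dhom R g)) /\
  (forall x, sval (Ehom R (idm x)) = sval (idA (Eobj R x))) /\
  (forall (x y z : Ob (Xcat R)) (f : Hom x y) (g : Hom y z),
      sval (Ehom R (comp g f)) = sval (compA (Ehom R f) (Ehom R g))) /\
  (forall (A B : objA V) (f : homA A B),
      sval (compA (unit R B) f) = sval (compA (Ehom R (Dhom R f)) (unit R A))) /\
  (forall (x y : Ob (Xcat R)) (f : Hom x y),
      comp (counit R y) f = comp (Dhom R (Ehom R f)) (counit R x)) /\
  (forall A, exists g : homA (Eobj R (Dobj R A)) A,
      sval (compA g (unit R A)) = sval (idA A) /\
      sval (compA (unit R A) g) = sval (idA _)) /\
  (forall x, exists g : Hom (Dobj R (Eobj R x)) x,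
      comp g (counit R x) = idm x /\ comp (counit R x) g = idm _) /\
  (* ^flat o D = H o ^flat *)
  (forall A, fobj (flat R) (Dobj R A) = rawH (reduct lt (sval A))) /\
  (forall (A B : objA V) (f : homA A B),
      existT tmap (fobj (flat R) (Dobj R B), fobj (flat R) (Dobj R A))
        (fhom (flat R) (Dhom R f)) =
      existT tmap (rawH (reduct lt (sval B)), rawH (reduct lt (sval A)))
        (Hmap (hom_reduct lt (svalP f)))) /\
  (* ^flat o E = K o ^flat *)
  (forall x, reduct lt (sval (Eobj R x)) = rawK (fobj (flat R) x)) /\
  (forall (x y : Ob (Xcat R)) (f : Hom x y),
      existT dmap (reduct lt (sval (Eobj R y)), reduct lt (sval (Eobj R x)))
        (sval (Ehom R f)) =
      existT dmap (rawK (fobj (flat R) y), rawK (fobj (flat R) x))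
        (Kmap (fhom_pm (flat R) f))) /\
  (* e_A^flat = e_{A^flat} *)
  (forall A : objA V,
      existT dmap (reduct lt (sval A), reduct lt (sval (Eobj R (Dobj R A))))
        (sval (unit R A)) =
      existT dmap (reduct lt (sval A), rawK (rawH (reduct lt (sval A))))
        (@evK (reduct lt (sval A)))) /\
  (* eps_X^flat = eps_{X^flat} *)
  (forall x : Ob (Xcat R),
      existT tmap (fobj (flat R) x, fobj (flat R) (Dobj R (Eobj R x)))
        (fhom (flat R) (counit R x)) =
      existT tmap (fobj (flat R) x, rawH (rawK (fobj (flat R) x)))
        (@evH (fobj (flat R) x))).

Definition surj {T U : Type} (f : T -> U) : Prop := forall y, exists x, f x = y.

Definition jointly_surj {T1 T2 U : Type} (f1 : T1 -> U) (f2 : T2 -> U) : Prop :=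
  forall y, (exists x, f1 x = y) \/ (exists x, f2 x = y).

(* Y = f1(X1) \dot\cup f2(X2) as ordered spaces *)
Definition disjoint_union (Y : tspace) {T1 T2 : Type}
  (f1 : T1 -> pt Y) (f2 : T2 -> pt Y) : Prop :=
  (forall a b, f1 a <> f2 b) /\
  jointly_surj f1 f2 /\
  (forall a b, ~ ple Y (f1 a) (f2 b) /\ ~ ple Y (f2 b) (f1 a)).

(* Main.v *)
Require Import Defs.
From Stdlib Require Import List.
From mathcomp Require Import all_boot.
From Stdlib Require Import FunctionalExtensionality ClassicalEpsilon ProofIrrelevance Eqdep Classical.

Lemma sig_eq (A : Type) (P : A -> Prop) (x y : {a | P a}) : sval x = sval y -> x = y.
Proof. case: x y => [a pa] [b pb] /= e; subst b; f_equal; apply: proof_irrelevance. Qed.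

Lemma transfer (I : Type) (P : I -> Type) (i j : I) (x : P i) (y : P j)
  (Q : forall i, P i -> Prop) : existT P i x = existT P j y -> Q i x -> Q j y.
Proof. move=> h q; exact (@eq_rect _ (existT P i x) (fun s => Q (projT1 s) (projT2 s)) q _ h). Qed.

Definition castD {L L' : rawDL} (e : L = L') (a : dcar L) : dcar L' :=
  eq_rect L dcar a L' e.
Lemma castD_top L L' (e : L = L') : castD e (dtop L) = dtop L'.
Proof. by case: _ / e. Qed.
Lemma castD_bot L L' (e : L = L') : castD e (dbot L) = dbot L'.
Proof. by case: _ / e. Qed.
Lemma castD_inj L L' (e : L = L') a b : castD e a = castD e b -> a = b.
Proof. by case: _ / e. Qed.
Lemma castD_surj L L' (e : L = L') b : exists a, castD e a = b.
Proof. case: _ / e in b *; by exists b. Qed.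

Lemma dmap_cast (L M L' M' : rawDL) (f : dmap (L, M)) (f' : dmap (L', M'))
  (h : existT dmap (L, M) f = existT dmap (L', M') f') (eL : L = L') (eM : M = M') a :
  castD eM (f a) = f' (castD eL a).
Proof.
move: f' h; case: _ / eL; case: _ / eM => f' h /=.
by have -> := inj_pairT2 _ _ _ _ _ h.
Qed.

Definition castT {X X' : tspace} (e : X = X') (a : pt X) : pt X' :=
  eq_rect X pt a X' e.
Lemma castT_inj X X' (e : X = X') a b : castT e a = castT e b -> a = b.
Proof. by case: _ / e. Qed.
Lemma castT_surj X X' (e : X = X') b : exists a, castT e a = b.
Proof. case: _ / e in b *; by exists b. Qed.

Lemma tmap_cast (X Y X' Y' : tspace) (f : tmap (X, Y)) (f' : tmap (X', Y'))
  (h : existT tmap (X, Y) f = existT tmap (X', Y') f') (eX : X = X') (eY : Y = Y') a :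
  castT eY (f a) = f' (castT eX a).
Proof.
move: f' h; case: _ / eX; case: _ / eY => f' h /=.
by have -> := inj_pairT2 _ _ _ _ _ h.
Qed.

Lemma cond_transfer (X1 X2 Y X1' X2' Y' : tspace) (e1 : X1 = X1') (e2 : X2 = X2')
  (eY : Y = Y') (f1 : pt X1 -> pt Y) (f2 : pt X2 -> pt Y)
  (f1' : pt X1' -> pt Y') (f2' : pt X2' -> pt Y') :
  (forall x, castT eY (f1 x) = f1' (castT e1 x)) ->
  (forall x, castT eY (f2 x) = f2' (castT e2 x)) ->
  (jointly_surj f1 f2 <-> jointly_surj f1' f2') /\
  (disjoint_union Y f1 f2 <-> disjoint_union Y' f1' f2') /\
  (surj f1 <-> surj f1') /\ (surj f2 <-> surj f2').
Proof.
move: f1' f2'; case: _ / e1; case: _ / e2; case: _ / eY => f1' f2' /= h1 h2.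
have E1 : f1' = f1 by apply: functional_extensionality => x; rewrite h1.
have E2 : f2' = f2 by apply: functional_extensionality => x; rewrite h2.
by subst; tauto.
Qed.

Definition pb (P : Prop) : bool := if excluded_middle_informative P then true else false.
Lemma pbP (P : Prop) : pb P = true <-> P.
Proof. by rewrite /pb; case: excluded_middle_informative. Qed.
Lemma pbF (P : Prop) : pb P = false <-> ~ P.
Proof. by rewrite /pb; case: excluded_middle_informative. Qed.
Arguments dmap_cast {L M L' M' f f'} h eL eM a.
Arguments tmap_cast {X Y X' Y' f f'} h eX eY a.
Arguments castD_inj {L L'} e {a b}.
Arguments castD_surj {L L'} e b.
Arguments castT_inj {X X'} e {a b}.
Arguments castT_surj {X X'} e b.
Arguments castD_top {L L'} e.
Arguments castD_bot {L L'} e.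
Arguments cond_transfer {X1 X2 Y X1' X2' Y'} e1 e2 eY {f1 f2 f1' f2'}.
Section Lat.
Variable L : rawDL.
Hypothesis hL : is_bdl L.
Notation "x ∧ y" := (dmeet L x y) (at level 40).
Notation "x ∨ y" := (djoin L x y) (at level 50).

Lemma meet_idem x : x ∧ x = x.
Proof. case: hL => [mA [jA [mC [jC [ab1 [ab2 _]]]]]]. by rewrite -{2}(ab2 x x) ab1. Qed.
Lemma join_idem x : x ∨ x = x.
Proof. case: hL => [mA [jA [mC [jC [ab1 [ab2 _]]]]]]. by rewrite -{2}(ab1 x x) ab2. Qed.
Lemma meet_bot x : x ∧ dbot L = dbot L.
Proof.
case: hL => [mA [jA [mC [jC [ab1 [ab2 [ds [mt jb]]]]]]]].
by rewrite mC -{1}(jb x) jC ab1.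
Qed.
Lemma bot_join x : dbot L ∨ x = x.
Proof. case: hL => [mA [jA [mC [jC [ab1 [ab2 [ds [mt jb]]]]]]]]. by rewrite jC jb. Qed.

Definition dmaj x y z := ((x ∧ y) ∨ (y ∧ z)) ∨ (x ∧ z).
Lemma maj1 x z : dmaj x x z = x.
Proof.
case: hL => [mA [jA [mC [jC [ab1 [ab2 _]]]]]].
by rewrite /dmaj meet_idem !ab2.
Qed.
Lemma maj2 x y : dmaj x y x = x.
Proof.
case: hL => [mA [jA [mC [jC [ab1 [ab2 _]]]]]].
by rewrite /dmaj (mC y x) join_idem meet_idem jC ab2.
Qed.
Lemma maj3 x y : dmaj y x x = x.
Proof.
case: hL => [mA [jA [mC [jC [ab1 [ab2 _]]]]]].
by rewrite /dmaj meet_idem (mC y x) (jC (x ∧ y)) ab2 ab2.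
Qed.
End Lat.

Fixpoint tsubst {S : signature} {n m : nat} (s : 'I_n -> term S m) (t : term S n) : term S m :=
  match t with
  | Var i => s i
  | App o args => App o (fun j => tsubst s (args j))
  end.

Lemma eval_subst {S : signature} (A : algebra S) n m (s : 'I_n -> term S m) env t :
  eval A env (tsubst s t) = eval A (fun i => eval A env (s i)) t.
Proof.
elim: t => [i|o args IH] //=; congr (opr A o _); apply: functional_extensionality => j; exact: IH.
Qed.

Definition meetT {S} (lt : lattice_terms S) {m} (a b : term S m) := tsubst (env2 a b) (tmeet lt).
Definition joinT {S} (lt : lattice_terms S) {m} (a b : term S m) := tsubst (env2 a b) (tjoin lt).

Lemma env2_map {T U : Type} (f : T -> U) x y : (fun i => f (@env2 T x y i)) = env2 (f x) (f y).
Proof. by apply: functional_extensionality => i; rewrite /env2; case: ifP. Qed.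
Lemma env3_map {T U : Type} (f : T -> U) x y z :
  (fun i => f (@env3 T x y z i)) = env3 (f x) (f y) (f z).
Proof. by apply: functional_extensionality => i; rewrite /env3; case: ifP => //; case: ifP. Qed.

Lemma eval_meetT {S} (lt : lattice_terms S) (A : algebra S) m env (a b : term S m) :
  eval A env (meetT lt a b) = dmeet (reduct lt A) (eval A env a) (eval A env b).
Proof. by rewrite /meetT eval_subst env2_map. Qed.
Lemma eval_joinT {S} (lt : lattice_terms S) (A : algebra S) m env (a b : term S m) :
  eval A env (joinT lt a b) = djoin (reduct lt A) (eval A env a) (eval A env b).
Proof. by rewrite /joinT eval_subst env2_map. Qed.

Definition majT {S} (lt : lattice_terms S) {m} (a b c : term S m) :=
  joinT lt (joinT lt (meetT lt a b) (meetT lt b c)) (meetT lt a c).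
Lemma eval_majT {S} (lt : lattice_terms S) (A : algebra S) m env (a b c : term S m) :
  eval A env (majT lt a b c) =
  dmaj (reduct lt A) (eval A env a) (eval A env b) (eval A env c).
Proof. by rewrite /majT !eval_joinT !eval_meetT. Qed.

Lemma eval3_hom {S} (A B : algebra S) (u : car A -> car B) t x y z :
  is_hom A B u -> u (eval A (env3 x y z) t) = eval B (env3 (u x) (u y) (u z)) t.
Proof. move=> hu; by rewrite (eval_hom hu) env3_map. Qed.

Lemma disc_iso {S} (A B : algebra S) (u : car A -> car B) (v : car B -> car A) t :
  is_hom A B u -> (forall x, v (u x) = x) -> (forall y, u (v y) = y) ->
  is_discriminator A t -> is_discriminator B t.
Proof.
move=> hu vu uv dA x y z.
have E : eval B (env3 x y z) t = u (eval A (env3 (v x) (v y) (v z)) t)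
  by rewrite eval3_hom // !uv.
have [d1 d2] := dA (v x) (v y) (v z); rewrite E; split.
- by move=> exy; rewrite d1 ?uv // exy.
- by move=> nxy; rewrite d2 ?uv // => h; apply: nxy; rewrite -(uv x) h uv.
Qed.

Lemma L1 {S} (C C1 C2 : algebra S) p1 p2 t :
  is_hom C C1 p1 -> is_hom C C2 p2 -> is_discriminator C1 t -> is_discriminator C2 t ->
  forall g g', p1 g = p1 g' -> p2 g <> p2 g' ->
  forall u v, exists k, p1 k = p1 u /\ p2 k = p2 v.
Proof.
move=> h1 h2 d1 d2 g g' e1 n2 u v.
pose T x y z := eval C (env3 x y z) t.
have P1 : forall x y z, p1 (T x y z) = eval C1 (env3 (p1 x) (p1 y) (p1 z)) t
  by move=> *; exact: eval3_hom.
have P2 : forall x y z, p2 (T x y z) = eval C2 (env3 (p2 x) (p2 y) (p2 z)) t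
  by move=> *; exact: eval3_hom.
have gen : forall a b, p1 a = p1 b -> p2 a <> p2 b -> p2 a <> p2 v ->
    exists k, p1 k = p1 u /\ p2 k = p2 v.
  move=> a b eab nab nav.
  pose m := T a b v.
  have m1 : p1 m = p1 v by rewrite P1 eab (proj1 (d1 _ _ _)).
  have m2 : p2 m = p2 a by rewrite P2 (proj2 (d2 _ _ _)).
  exists (T v m u); split.
  - by rewrite P1 m1 (proj1 (d1 _ _ _)).
  - rewrite P2 m2 (proj2 (d2 _ _ _)) //; by move=> h; apply: nav.
case: (classic (p2 g = p2 v)) => [E|E].
- apply: (gen g' g) => //; first by move=> h; apply: n2.
  by move=> h; apply: n2; rewrite E.
- exact: (gen g g').
Qed.
Arguments disc_iso {S A B u v t}.
Arguments L1 {S C C1 C2 p1 p2 t}.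

Lemma chi_pm (Y : tspace) (U : pt Y -> Prop) :
  clopen Y U -> upset Y U -> pmorph Y two (fun y => pb (U y)).
Proof.
move=> [oU oC] uU; split.
- move=> V _; apply: popen_local => x Vx.
  case: (classic (U x)) => Ux.
  + exists U; split => //; split => // z Uz.
    by rewrite (proj2 (pbP _) Uz); rewrite (proj2 (pbP _) Ux) in Vx.
  + exists (fun z => ~ U z); split => //; split => // z Uz.
    by rewrite (proj2 (pbF _) Uz); rewrite (proj2 (pbF _) Ux) in Vx.
- move=> x z le /=; case E: (pb (U x)) => //=.
  by rewrite (proj2 (pbP _) (uU _ _ (proj1 (pbP _) E) le)).
Qed.

Arguments chi_pm {Y U}.

Definition cstK (Y : tspace) (b : bool) : Kcar Y := exist _ (fun _ => b) (pmorph_const Y b).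

Section KU.
Variables (X Y : tspace) (kf : pt X -> Kcar Y) (y : pt Y).
Definition KU (l : list (pt X)) : Kcar Y :=
  foldr (fun x acc => djoin (rawK Y) (dmeet (rawK Y) (cstK Y (~~ sval (kf x) y)) (kf x)) acc)
    (dbot (rawK Y)) l.
Definition KV (l : list (pt X)) : Kcar Y :=
  foldr (fun x acc => dmeet (rawK Y) (djoin (rawK Y) (cstK Y (~~ sval (kf x) y)) (kf x)) acc)
    (dtop (rawK Y)) l.
Lemma KU_in l x z : In x l -> sval (kf x) y = false -> sval (kf x) z = true -> sval (KU l) z = true.
Proof.
elim: l => [|a l IH] //= [<-|h] e1 e2; first by rewrite e1 e2.
by rewrite (IH h e1 e2) orbT.
Qed.
Lemma KU_y l : sval (KU l) y = false.
Proof. by elim: l => [|a l IH] //=; rewrite IH orbF; case: (sval (kf a) y). Qed.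
Lemma KV_in l x z : In x l -> sval (KV l) z = true -> sval (kf x) y = true -> sval (kf x) z = true.
Proof.
elim: l => [|a l IH] //= [<-|h].
- by move=> /andP [h1 _] e; rewrite e in h1.
- by move=> /andP [_ h2] e; exact: IH.
Qed.
Lemma KV_y l : sval (KV l) y = true.
Proof. by elim: l => [|a l IH] //=; rewrite IH andbT; case: (sval (kf a) y). Qed.
End KU.
Arguments KU {X Y} kf y l.
Arguments KV {X Y} kf y l.
Arguments KU_in {X Y kf y l x z}.
Arguments KV_in {X Y kf y l x z}.
Arguments KU_y {X Y} kf y l.
Arguments KV_y {X Y} kf y l.

Lemma kmap_inj_surj (X Y : tspace) (f : pt X -> pt Y) (hf : pmorph X Y f) :
  compact X -> is_priestley Y ->
  (forall k k' : Kcar Y, Kmap hf k = Kmap hf k' -> k = k') -> surj f.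
Proof.
move=> cX [[refl [anti tr]] [_ sep]] inj y; apply: NNPP => ny.
have nim : forall x, f x <> y by move=> x e; apply: ny; exists x.
have sepx : forall x, exists k : Kcar Y,
    (sval k (f x) = true /\ sval k y = false) \/ (sval k y = true /\ sval k (f x) = false).
  move=> x; case: (classic (ple Y (f x) y)) => h.
  - have h2 : ~ ple Y y (f x) by move=> h'; apply: (nim x); apply: anti.
    have [U [cU [uU [Uy nUx]]]] := sep _ _ h2.
    exists (exist _ _ (chi_pm cU uU)); right; split; [exact/pbP|exact/pbF].
  - have [U [cU [uU [Ux nUy]]]] := sep _ _ h.
    exists (exist _ _ (chi_pm cU uU)); left; split; [exact/pbP|exact/pbF].
pose kf x := proj1_sig (constructive_indefinite_description _ (sepx x)).
have kfP : forall x, (sval (kf x) (f x) = true /\ sval (kf x) y = false) \/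
                     (sval (kf x) y = true /\ sval (kf x) (f x) = false).
  move=> x; exact: (proj2_sig (constructive_indefinite_description _ (sepx x))).
pose F := fun O : pt X -> Prop =>
  exists x, O = (fun x' => sval (kf x) (f x') = sval (kf x) (f x)).
have hO : forall O, F O -> popen X O.
  move=> O [x ->]; have [cc _] := pmorph_comp hf (svalP (kf x)).
  exact: (cc (fun b => b = sval (kf x) (f x)) I).
have hC : forall x, exists O, F O /\ O x.
  move=> x; exists (fun x' => sval (kf x) (f x') = sval (kf x) (f x)); split => //.
  by exists x.
have [s [sF scov]] := cX F hO hC.
have [l hl] : exists l : list (pt X), forall x', exists x,
    In x l /\ sval (kf x) (f x') = sval (kf x) (f x).
  have gl : forall s', (forall O, In O s' -> F O) -> exists l, forall O, In O s' -> exists x, In x l /\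
      O = (fun x' => sval (kf x) (f x') = sval (kf x) (f x)).
    elim => [|O s' IH] sF'; first by exists nil.
    have [x ex] := sF' O (or_introl erefl).
    have [l hl] := IH (fun O' h => sF' O' (or_intror h)).
    exists (x :: l) => O' [<-|h]; first by exists x; split => //; left.
    have [x' [h1 h2]] := hl O' h; exists x'; split => //; by right.
  have [l hl] := gl s sF.
  exists l => x'; have [O [Os Ox]] := scov x'; have [x [xl eO]] := hl O Os.
  by exists x; split => //; rewrite eO in Ox.
pose W1 := djoin (rawK Y) (KV kf y l) (KU kf y l).
pose W2 := KU kf y l.
have EW : Kmap hf W1 = Kmap hf W2.
  apply: sig_eq; apply: functional_extensionality => x' /=.
  case hU: (sval (KU kf y l) (f x')); first by rewrite orbT.
  rewrite orbF; have [x [xl ex]] := hl x'.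
  case: (kfP x) => [[a b]|[a b]].
  - by rewrite (KU_in xl b (etrans ex a)) in hU.
  - case hV: (sval (KV kf y l) (f x')) => //.
    by have := KV_in xl hV a; rewrite ex b.
have := f_equal (fun k => sval k y) (inj _ _ EW) => /=.
by rewrite KV_y KU_y.
Qed.

Lemma unit_iso {S} {V : algebra S -> Prop} (lt : lattice_terms S) (R : rpd_data V) (A : objA V) :
  is_rpd lt R -> exists v, (forall x, v (sval (unit R A) x) = x) /\
                           (forall y, sval (unit R A) (v y) = y).
Proof.
case=> [_ [_ [_ [_ [_ [_ [_ [_ [uiso _]]]]]]]]].
have [g [h1 h2]] := uiso A; exists (sval g); split.
- by move=> x; have := f_equal (fun F => F x) h1.
- by move=> y; have := f_equal (fun F => F y) h2.
Qed.

Lemma evK_bij {S} {V : algebra S -> Prop} (lt : lattice_terms S) (R : rpd_data V) (A : objA V) :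
  is_rpd lt R ->
  (forall a b, evK (reduct lt (sval A)) a = evK _ b -> a = b) /\
  (forall k, exists a, evK (reduct lt (sval A)) a = k).
Proof.
move=> hR; have [v [vu uv]] := unit_iso lt R A hR.
case: hR => [_ [_ [_ [_ [_ [_ [_ [_ [_ [_ [_ [_ [_ [_ [Eu _]]]]]]]]]]]]]]].
pose Q := fun (p : rawDL * rawDL) (f : dmap p) =>
  (forall a b, f a = f b -> a = b) /\ (forall k, exists a, f a = k).
apply: (@transfer _ dmap _ _ _ _ Q (Eu A)); split.
- by move=> a b e; rewrite -(vu a) -(vu b) e.
- by move=> k; exists (v k); rewrite uv.
Qed.

Lemma dir12 {S} {V : algebra S -> Prop} (lt : lattice_terms S) (R : rpd_data V)
  (B : list (objA V)) :
  is_rpd lt R -> (exists t, forall A, In A B -> is_discriminator (sval A) t) ->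
  forall A1 A2 : objA V, In A1 B -> In A2 B ->
   forall (Y : Ob (Xcat R))
          (phi1 : Hom (Dobj R A1) Y) (phi2 : Hom (Dobj R A2) Y),
     jointly_surj (fhom (flat R) phi1) (fhom (flat R) phi2) ->
     disjoint_union (fobj (flat R) Y) (fhom (flat R) phi1) (fhom (flat R) phi2)
     \/ (surj (fhom (flat R) phi1) /\ surj (fhom (flat R) phi2)).
Proof.
move=> hR [t Ht] A1 A2 iA1 iA2 Y phi1 phi2 js.
have hR' := hR.
case: hR' => [_ [[pP _] [_ [_ [_ [_ [_ [_ [_ [_ [_ [_ [Eob [Emo _]]]]]]]]]]]]]].
pose C := sval (Eobj R Y).
pose C1 := sval (Eobj R (Dobj R A1)).
pose C2 := sval (Eobj R (Dobj R A2)).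
pose p1 := sval (Ehom R phi1).
pose p2 := sval (Ehom R phi2).
have hp1 : is_hom C C1 p1 := svalP (Ehom R phi1).
have hp2 : is_hom C C2 p2 := svalP (Ehom R phi2).
have d1 : is_discriminator C1 t.
  have [v [vu uv]] := unit_iso lt R A1 hR; exact: (disc_iso (svalP (unit R A1)) vu uv (Ht A1 iA1)).
have d2 : is_discriminator C2 t.
  have [v [vu uv]] := unit_iso lt R A2 hR; exact: (disc_iso (svalP (unit R A2)) vu uv (Ht A2 iA2)).
have rel1 : forall g, castD (Eob (Dobj R A1)) (p1 g) =
    Kmap (fhom_pm (flat R) phi1) (castD (Eob Y) g).
  exact: (dmap_cast (Emo _ _ phi1) (Eob Y) (Eob (Dobj R A1))).
have rel2 : forall g, castD (Eob (Dobj R A2)) (p2 g) =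
    Kmap (fhom_pm (flat R) phi2) (castD (Eob Y) g).
  exact: (dmap_cast (Emo _ _ phi2) (Eob Y) (Eob (Dobj R A2))).
have [_ [_ [pb1 pt1]]] := hom_reduct lt hp1.
have [_ [_ [pb2 pt2]]] := hom_reduct lt hp2.
have val1 : forall k b, p1 k = (if b then dtop (reduct lt C1) else dbot (reduct lt C1)) ->
    forall x, sval (castD (Eob Y) k) (fhom (flat R) phi1 x) = b.
  move=> k b e x; have := rel1 k; rewrite e.
  case: b {e}; rewrite ?castD_top ?castD_bot => /(f_equal (fun q => sval q x)) //=.
have val2 : forall k b, p2 k = (if b then dtop (reduct lt C2) else dbot (reduct lt C2)) ->
    forall x, sval (castD (Eob Y) k) (fhom (flat R) phi2 x) = b.
  move=> k b e x; have := rel2 k; rewrite e.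
  case: b {e}; rewrite ?castD_top ?castD_bot => /(f_equal (fun q => sval q x)) //=.
have KK : (exists k k', p1 k = dtop (reduct lt C1) /\ p2 k = dbot (reduct lt C2) /\
                        p1 k' = dbot (reduct lt C1) /\ p2 k' = dtop (reduct lt C2)) ->
    disjoint_union (fobj (flat R) Y) (fhom (flat R) phi1) (fhom (flat R) phi2).
  move=> [k [k' [e1 [e2 [e3 e4]]]]].
  have Hk1 := val1 k true e1; have Hk2 := val2 k false e2.
  have Hk3 := val1 k' false e3; have Hk4 := val2 k' true e4.
  split; [|split => //].
  - by move=> a b e; have := Hk1 a; rewrite e Hk2.
  - move=> a b; split => le.
    + by have := (proj2 (svalP (castD (Eob Y) k))) _ _ le; rewrite /= Hk1 Hk2.
    + by have := (proj2 (svalP (castD (Eob Y) k'))) _ _ le; rewrite /= Hk3 Hk4.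
case: (classic (exists g g', p1 g = p1 g' /\ p2 g <> p2 g')) => [[g [g' [e n]]]|na].
  left; apply: KK.
  have [k [k1 k2]] := L1 hp1 hp2 d1 d2 _ _ e n (dtop (reduct lt C)) (dbot (reduct lt C)).
  have [k' [k1' k2']] := L1 hp1 hp2 d1 d2 _ _ e n (dbot (reduct lt C)) (dtop (reduct lt C)).
  by exists k, k'; rewrite k1 k2 k1' k2' pt1 pb2 pb1 pt2.
case: (classic (exists g g', p2 g = p2 g' /\ p1 g <> p1 g')) => [[g [g' [e n]]]|nb].
  left; apply: KK.
  have [k [k1 k2]] := L1 hp2 hp1 d2 d1 _ _ e n (dbot (reduct lt C)) (dtop (reduct lt C)).
  have [k' [k1' k2']] := L1 hp2 hp1 d2 d1 _ _ e n (dtop (reduct lt C)) (dbot (reduct lt C)).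
  by exists k, k'; rewrite k1 k2 k1' k2' pt1 pb2 pb1 pt2.
right.
have jinj : forall g g', p1 g = p1 g' -> p2 g = p2 g' -> g = g'.
  move=> g g' e1 e2; apply: (castD_inj (Eob Y)); apply: sig_eq.
  apply: functional_extensionality => y.
  have [[x <-]|[x <-]] := js y.
  - have : Kmap (fhom_pm (flat R) phi1) (castD (Eob Y) g) =
           Kmap (fhom_pm (flat R) phi1) (castD (Eob Y) g') by rewrite -!rel1 e1.
    by move/(f_equal (fun q => sval q x)).
  - have : Kmap (fhom_pm (flat R) phi2) (castD (Eob Y) g) =
           Kmap (fhom_pm (flat R) phi2) (castD (Eob Y) g') by rewrite -!rel2 e2.
    by move/(f_equal (fun q => sval q x)).
have i1 : forall g g', p1 g = p1 g' -> g = g'.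
  move=> g g' e; apply: jinj => //; apply: NNPP => n; apply: na; by exists g, g'.
have i2 : forall g g', p2 g = p2 g' -> g = g'.
  move=> g g' e; apply: jinj => //; apply: NNPP => n; apply: nb; by exists g, g'.
split.
- apply: (@kmap_inj_surj _ _ _ (fhom_pm (flat R) phi1)).
  + exact: (proj1 (proj2 (pP (Dobj R A1)))).
  + exact: pP.
  + move=> k k'.
    have [g <-] := castD_surj (Eob Y) k; have [g' <-] := castD_surj (Eob Y) k' => e.
    suff -> : g = g' by []; apply: i1; apply: (castD_inj (Eob (Dobj R A1))); by rewrite !rel1 e.
- apply: (@kmap_inj_surj _ _ _ (fhom_pm (flat R) phi2)).
  + exact: (proj1 (proj2 (pP (Dobj R A2)))).
  + exact: pP.
  + move=> k k'.
    have [g <-] := castD_surj (Eob Y) k; have [g' <-] := castD_surj (Eob Y) k' => e.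
    suff -> : g = g' by []; apply: i2; apply: (castD_inj (Eob (Dobj R A2))); by rewrite !rel2 e.
Qed.

Section Gen.
Variables (S : signature) (A1 A2 : algebra S) (e1 : 'I_3 -> car A1) (e2 : 'I_3 -> car A2).
Definition Sgen (p : car A1 * car A2) : Prop :=
  exists t : term S 3, p.1 = eval A1 e1 t /\ p.2 = eval A2 e2 t.
Definition Gcar := {p | Sgen p}.
Lemma Sgen_op o (args : 'I_(arity S o) -> Gcar) :
  Sgen (opr A1 o (fun j => (sval (args j)).1), opr A2 o (fun j => (sval (args j)).2)).
Proof.
have [ts hts] : exists ts : 'I_(arity S o) -> term S 3, forall j,
    (sval (args j)).1 = eval A1 e1 (ts j) /\ (sval (args j)).2 = eval A2 e2 (ts j).
  exists (fun j => proj1_sig (constructive_indefinite_description _ (svalP (args j)))).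
  move=> j; exact: (proj2_sig (constructive_indefinite_description _ (svalP (args j)))).
exists (App o ts); split => /=; congr (opr _ o _); apply: functional_extensionality => j;
  by case: (hts j).
Qed.
Definition Galg : algebra S := @Algebra S Gcar (fun o args => exist _ _ (Sgen_op o args)).
Lemma Galg_eval n (env : 'I_n -> Gcar) t :
  sval (eval Galg env t) =
  (eval A1 (fun i => (sval (env i)).1) t, eval A2 (fun i => (sval (env i)).2) t).
Proof.
elim: t => [i|o args IH] /=; first by case: (sval (env i)).
by congr pair; congr (opr _ o _); apply: functional_extensionality => j; rewrite IH.
Qed.
Lemma Galg_V (V : algebra S -> Prop) : is_variety V -> V A1 -> V A2 -> V Galg.
Proof.
move=> [Id hId] h1 h2; apply/hId => n l r hlr env.
apply: sig_eq; rewrite !Galg_eval.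
have s1 := proj1 (hId A1) h1 n l r hlr; have s2 := proj1 (hId A2) h2 n l r hlr.
by rewrite s1 s2.
Qed.
Lemma Gfin : finite_alg A1 -> finite_alg A2 -> exists lst : list Gcar, forall c, In c lst.
Proof.
move=> [l1 h1] [l2 h2].
exists (flat_map (fun p => match excluded_middle_informative (Sgen p) with
                           | left H => exist _ p H :: nil | right _ => nil end)
                 (list_prod l1 l2)).
move=> c; apply/in_flat_map; exists (sval c); split.
- by rewrite [sval c]surjective_pairing; apply: in_prod.
- case: excluded_middle_informative => H; last by case: (H (svalP c)).
  by left; apply: sig_eq.
Qed.
End Gen.
Arguments Sgen {S A1 A2} e1 e2 p.
Arguments Gcar {S A1 A2} e1 e2.
Arguments Galg {S A1 A2} e1 e2.
Arguments Galg_V {S A1 A2} e1 e2 {V}.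
Arguments Gfin {S A1 A2} e1 e2.

Lemma pb_iff (P Q : Prop) : (P <-> Q) -> pb P = pb Q.
Proof. rewrite /pb => h; case: (excluded_middle_informative P) => p; case: (excluded_middle_informative Q) => q //; exfalso; tauto. Qed.

Lemma H_discrete (L : rawDL) : (exists lst : list (dcar L), forall a, In a lst) ->
  forall U, popen (rawH L) U.
Proof.
move=> [lst hl] U x Ux; exists (List.map (fun a => (a, sval x a)) lst); split.
- by apply/Forall_forall => p /in_map_iff [a [<- _]].
- move=> y hy; suff -> : y = x by [].
  apply: sig_eq; apply: functional_extensionality => a.
  exact: (proj1 (Forall_forall _ _) hy (a, sval x a) (in_map (fun a => (a, sval x a)) _ _ (hl a))).
Qed.

Lemma H_refl (L : rawDL) (x : Hcar L) : ple (rawH L) x x.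
Proof. by move=> a /=; case: (sval x a). Qed.
Lemma H_trans (L : rawDL) (x y z : Hcar L) :
  ple (rawH L) x y -> ple (rawH L) y z -> ple (rawH L) x z.
Proof.
move=> h1 h2 a /=; have := h1 a; have := h2 a; rewrite /=.
by case: (sval x a); case: (sval y a); case: (sval z a).
Qed.
Lemma H_anti (L : rawDL) (x y : Hcar L) :
  ple (rawH L) x y -> ple (rawH L) y x -> x = y.
Proof.
move=> h1 h2; apply: sig_eq; apply: functional_extensionality => a.
have := h1 a; have := h2 a; rewrite /=.
by case: (sval x a); case: (sval y a).
Qed.

Arguments H_trans {L x y z}.
Arguments H_anti {L x y}.
Arguments H_refl {L} x.

Section HL.
Variables (L L1 L2 : rawDL) (p1 : dcar L -> dcar L1) (p2 : dcar L -> dcar L2)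
  (h1 : is_dlhom L L1 p1) (h2 : is_dlhom L L2 p2).
Hypothesis fin : exists lst : list (dcar L), forall a, In a lst.
Hypothesis sur : forall k, exists a, evK L a = k.
Hypothesis iL : forall a b, evK L a = evK L b -> a = b.
Hypothesis i1 : forall a b, evK L1 a = evK L1 b -> a = b.
Hypothesis i2 : forall a b, evK L2 a = evK L2 b -> a = b.

Lemma F1 : (forall a b, p1 a = p1 b -> p2 a = p2 b -> a = b) ->
  jointly_surj (Hmap h1) (Hmap h2).
Proof.
move=> ji h; apply: NNPP => nh.
have n1 : forall x, Hmap h1 x <> h by move=> x e; apply: nh; left; exists x.
have n2 : forall x, Hmap h2 x <> h by move=> x e; apply: nh; right; exists x.
pose U z := pb (ple (rawH L) h z).
pose W z := pb (ple (rawH L) h z /\ z <> h).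
have pU : pmorph (rawH L) two U.
  split; first by move=> V _; apply: H_discrete.
  move=> x y le /=; case E: (U x) => //=; apply/pbP.
  exact: (H_trans (proj1 (pbP _) E) le).
have pW : pmorph (rawH L) two W.
  split; first by move=> V _; apply: H_discrete.
  move=> x y le /=; case E: (W x) => //=; apply/pbP.
  have [hx nx] := proj1 (pbP _) E; split; first exact: (H_trans hx le).
  move=> eyh; apply: nx; apply: H_anti => //; by rewrite -eyh.
have [u eu] := sur (exist _ U pU).
have [w ew] := sur (exist _ W pW).
have UW : forall z, z <> h -> U z = W z.
  by move=> z nz; apply: pb_iff; split => [a|[]//]; split.
have euw : u = w.
  apply: ji.
  - apply: i1; apply: sig_eq; apply: functional_extensionality => x /=.
    have := f_equal (fun k => sval k (Hmap h1 x)) eu.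
    have := f_equal (fun k => sval k (Hmap h1 x)) ew.
    by rewrite /= => -> ->; apply: UW.
  - apply: i2; apply: sig_eq; apply: functional_extensionality => x /=.
    have := f_equal (fun k => sval k (Hmap h2 x)) eu.
    have := f_equal (fun k => sval k (Hmap h2 x)) ew.
    by rewrite /= => -> ->; apply: UW.
have := f_equal (fun k => sval k h) eu; have := f_equal (fun k => sval k h) ew.
rewrite euw /= => -> .
rewrite /U /W (proj2 (pbP _) (H_refl h)) (proj2 (pbF _)) //.
by case.
Qed.

Lemma F3 : disjoint_union (rawH L) (Hmap h1) (Hmap h2) ->
  exists e, p1 e = dtop L1 /\ p2 e = dbot L2.
Proof.
move=> [dis [js inc]].
pose X z := pb (exists x, Hmap h1 x = z).
have pX : pmorph (rawH L) two X.
  split; first by move=> V _; apply: H_discrete.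
  move=> z z' le /=; case E: (X z) => //=; apply/pbP.
  have [x ex] := proj1 (pbP _) E.
  case: (js z') => [//|[x' ex']].
  by case: (proj1 (inc x x')); rewrite ex ex'.
have [e ee] := sur (exist _ X pX).
exists e; split.
- apply: i1; apply: sig_eq; apply: functional_extensionality => x /=.
  have [_ [_ [_ ->]]] := svalP x.
  have := f_equal (fun k => sval k (Hmap h1 x)) ee; rewrite /= => ->.
  by apply/pbP; exists x.
- apply: i2; apply: sig_eq; apply: functional_extensionality => x /=.
  have [_ [_ [-> _]]] := svalP x.
  have := f_equal (fun k => sval k (Hmap h2 x)) ee; rewrite /= => ->.
  by apply/pbF => [[x' ex']]; apply: (dis x' x).
Qed.

Lemma F2 : surj (Hmap h1) -> forall a b, p1 a = p1 b -> a = b.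
Proof.
move=> s a b e; apply: iL; apply: sig_eq; apply: functional_extensionality => h /=.
by have [x <-] := s h; rewrite /= e.
Qed.
End HL.
Arguments F1 {L L1 L2 p1 p2}.
Arguments F3 {L L1 L2 p1 p2}.
Arguments F2 {L L1 p1}.

Lemma DU_swap (Y : tspace) T1 T2 (f1 : T1 -> pt Y) (f2 : T2 -> pt Y) :
  disjoint_union Y f1 f2 -> disjoint_union Y f2 f1.
Proof.
move=> [d [j i]]; split; [|split].
- by move=> a b e; apply: (d b a).
- by move=> y; case: (j y); [right|left].
- by move=> a b; have [x1 x2] := i b a.
Qed.
Arguments DU_swap {Y T1 T2 f1 f2}.

Definition disc {T : Type} (x y z : T) : T :=
  if excluded_middle_informative (x = y) then z else x.

Definition i0 : 'I_3 := @Ordinal 3 0 isT.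
Definition i1 : 'I_3 := @Ordinal 3 1 isT.
Definition i2 : 'I_3 := @Ordinal 3 2 isT.
Definition vsel (P : Prop) : 'I_3 := if excluded_middle_informative P then i2 else i0.
Lemma env3_vsel {T : Type} (x y z : T) : env3 x y z (vsel (x = y)) = disc x y z.
Proof. by rewrite /vsel /disc; case: excluded_middle_informative. Qed.

Lemma pair_interp {S} {V : algebra S -> Prop} (lt : lattice_terms S) (R : rpd_data V)
  (B : list (objA V)) :
  is_variety V -> (forall A : algebra S, V A -> is_bdl (reduct lt A)) -> is_rpd lt R ->
  (forall A : objA V, In A B -> finite_alg (sval A)) ->
  (forall A1 A2 : objA V, In A1 B -> In A2 B ->
   forall (Y : Ob (Xcat R))
          (phi1 : Hom (Dobj R A1) Y) (phi2 : Hom (Dobj R A2) Y),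
     jointly_surj (fhom (flat R) phi1) (fhom (flat R) phi2) ->
     disjoint_union (fobj (flat R) Y) (fhom (flat R) phi1) (fhom (flat R) phi2)
     \/ (surj (fhom (flat R) phi1) /\ surj (fhom (flat R) phi2))) ->
  forall A1 A2 : objA V, In A1 B -> In A2 B -> forall x1 y1 z1 x2 y2 z2,
  exists t, eval (sval A1) (env3 x1 y1 z1) t = disc x1 y1 z1 /\
            eval (sval A2) (env3 x2 y2 z2) t = disc x2 y2 z2.
Proof.
move=> hV hbdl hR hfin H2 A1 A2 iA1 iA2 x1 y1 z1 x2 y2 z2.
pose e1 := env3 x1 y1 z1; pose e2 := env3 x2 y2 z2.
pose G := Galg e1 e2.
have GV : V G := Galg_V e1 e2 hV (svalP A1) (svalP A2).
pose Gobj : objA V := exist _ G GV.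
pose pi1 : homA Gobj A1 := exist (is_hom (sval Gobj) (sval A1)) (fun c : Gcar e1 e2 => (sval c).1) (fun o args => erefl).
pose pi2 : homA Gobj A2 := exist (is_hom (sval Gobj) (sval A2)) (fun c : Gcar e1 e2 => (sval c).2) (fun o args => erefl).
have [iG sG] := evK_bij lt R Gobj hR.
have [iA1' _] := evK_bij lt R A1 hR.
have [iA2' _] := evK_bij lt R A2 hR.
have finG : exists lst : list (dcar (reduct lt (sval Gobj))), forall a, In a lst.
  exact: (Gfin e1 e2 (hfin A1 iA1) (hfin A2 iA2)).
have hR' := hR.
case: hR' => [_ [_ [_ [_ [_ [_ [_ [_ [_ [_ [Dob [Dmo _]]]]]]]]]]]].
have rel1 := tmap_cast (Dmo _ _ pi1) (Dob A1) (Dob Gobj).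
have rel2 := tmap_cast (Dmo _ _ pi2) (Dob A2) (Dob Gobj).
have [T1 [T2 [T3 T4]]] := cond_transfer _ _ _ rel1 rel2.
have JS := F1 (hom_reduct lt (svalP pi1)) (hom_reduct lt (svalP pi2)) finG sG iA1' iA2'.
have JS' : jointly_surj (Hmap (hom_reduct lt (svalP pi1))) (Hmap (hom_reduct lt (svalP pi2))).
  apply: JS => a b ea eb; apply: sig_eq.
  by rewrite [sval a]surjective_pairing [sval b]surjective_pairing; simpl in ea, eb; rewrite ea eb.
have [bdl1 bdl2] := (hbdl _ (svalP A1), hbdl _ (svalP A2)).
case: (H2 A1 A2 iA1 iA2 (Dobj R Gobj) (Dhom R pi1) (Dhom R pi2) (proj2 T1 JS')) => [DU|[s1 s2]].
- have DU' := proj1 T2 DU.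
  have [e [ea eb]] := F3 (hom_reduct lt (svalP pi1)) (hom_reduct lt (svalP pi2)) finG sG iA1' iA2' DU'.
  have [e' [ea' eb']] := F3 (hom_reduct lt (svalP pi2)) (hom_reduct lt (svalP pi1)) finG sG iA2' iA1' (DU_swap DU').
  have [te [te1 te2]] := svalP e.
  have [te' [te1' te2']] := svalP e'.
  simpl in ea, eb, ea', eb'.
  exists (joinT lt (meetT lt (Var (vsel (x1 = y1))) te) (meetT lt (Var (vsel (x2 = y2))) te')).
  rewrite !eval_joinT !eval_meetT -te1 -te2 -te1' -te2' ea eb ea' eb'.
  have [_ [_ [_ [_ [_ [_ [_ [mt1 jb1]]]]]]]] := bdl1.
  have [_ [_ [_ [_ [_ [_ [_ [mt2 jb2]]]]]]]] := bdl2.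
  split.
  + rewrite mt1 meet_bot // jb1; exact: env3_vsel.
  + rewrite mt2 meet_bot // bot_join //; exact: env3_vsel.
- have s1' := proj1 T3 s1; have s2' := proj1 T4 s2.
  have inj1 := F2 (hom_reduct lt (svalP pi1)) iG s1'.
  have inj2 := F2 (hom_reduct lt (svalP pi2)) iG s2'.
  pose g (k : 'I_3) : Gcar e1 e2 := exist _ (e1 k, e2 k) (ex_intro _ (Var k) (conj erefl erefl)).
  have E : (x1 = y1) <-> (x2 = y2).
    split => h.
    + have := inj1 (g i0) (g i1) h => /(f_equal (fun c => (sval c).2)) //.
    + have := inj2 (g i0) (g i1) h => /(f_equal (fun c => (sval c).1)) //.
  exists (Var (vsel (x1 = y1))); split; first exact: env3_vsel.
  rewrite /= /vsel /disc; case: (excluded_middle_informative (x1 = y1));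
    case: (excluded_middle_informative (x2 = y2)) => p q; first [reflexivity | exfalso; tauto].
Qed.

Definition pts {S} (V : algebra S -> Prop) :=
  {A : objA V & (car (sval A) * car (sval A) * car (sval A))%type}.
Definition pint {S} {V : algebra S -> Prop} (t : term S 3) (p : pts V) : Prop :=
  eval (sval (projT1 p)) (env3 (projT2 p).1.1 (projT2 p).1.2 (projT2 p).2) t =
  disc (projT2 p).1.1 (projT2 p).1.2 (projT2 p).2.

Lemma maj_lemma {S} {V : algebra S -> Prop} (lt : lattice_terms S)
  (hbdl : forall A : algebra S, V A -> is_bdl (reduct lt A)) (Pin : pts V -> Prop) :
  (forall p q, Pin p -> Pin q -> exists t, pint t p /\ pint t q) ->
  forall l, (forall p, In p l -> Pin p) -> exists t, forall p, In p l -> pint t p.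
Proof.
move=> pair l; have [n ln] := ubnP (size l); elim: n l ln => // n IH l ln hl.
case: l ln hl => [|p1 [|p2 [|p3 r]]] ln hl.
- by exists (Var i0).
- have [t [tp _]] := pair p1 p1 (hl _ (or_introl erefl)) (hl _ (or_introl erefl)).
  by exists t => p [<-|[]].
- have [t [tp tq]] := pair p1 p2 (hl _ (or_introl erefl)) (hl _ (or_intror (or_introl erefl))).
  by exists t => p [<-|[<-|[]]].
- have sz : (size r).+2 < n by move: ln.
  have [t1 h1] := IH (p2 :: p3 :: r) sz (fun p h => hl p (or_intror h)).
  have [t2 h2] := IH (p1 :: p3 :: r) sz
    (fun p h => hl p (match h with or_introl e => or_introl e | or_intror h' => or_intror (or_intror h') end)).
  have [t3 h3] := IH (p1 :: p2 :: r) sz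
    (fun p h => hl p (match h with or_introl e => or_introl e | or_intror (or_introl e) => or_intror (or_introl e) | or_intror (or_intror h') => or_intror (or_intror (or_intror h')) end)).
  have pm : forall p : pts V, (pint t1 p /\ pint t2 p) \/ (pint t1 p /\ pint t3 p) \/
                      (pint t2 p /\ pint t3 p) -> pint (majT lt t1 t2 t3) p.
    move=> p; rewrite /pint eval_majT; have bd := hbdl _ (svalP (projT1 p)).
    by case=> [[-> ->]|[[-> ->]|[-> ->]]]; [exact: (@maj1 _ bd)|exact: (@maj2 _ bd)|exact: (@maj3 _ bd)].
  exists (majT lt t1 t2 t3) => p [<-|[<-|[<-|hr]]]; apply: pm.
  + by right; right; split; [apply: h2; left|apply: h3; left].
  + by right; left; split; [apply: h1; left|apply: h3; right; left].
  + by left; split; [apply: h1; right; left|apply: h2; right; left].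
  + by left; split; [apply: h1; right; right|apply: h2; right; right].
Qed.

Lemma pts_list {S} {V : algebra S -> Prop} (B : list (objA V)) :
  (forall A : objA V, In A B -> finite_alg (sval A)) ->
  exists l : list (pts V), (forall p, In p l -> In (projT1 p) B) /\
    forall A, In A B -> forall x y z, In (existT _ A (x, y, z)) l.
Proof.
elim: B => [|A B' IH] hf; first by exists nil; split.
have [lst hlst] := hf A (or_introl erefl).
have [l [l1 l2]] := IH (fun A' h => hf A' (or_intror h)).
exists (List.map (fun q => existT _ A q) (list_prod (list_prod lst lst) lst) ++ l); split.
- move=> p /in_app_iff [/in_map_iff [q [<- _]]|h]; [by left|right; exact: l1].
- move=> A' [<-|h] x y z; apply/in_app_iff; [left|right; exact: l2].
  apply/in_map_iff; exists (x, y, z); split => //.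
  by apply: in_prod; [apply: in_prod|].
Qed.

Theorem theorem3p4 (S : signature) (V : algebra S -> Prop)
  (lt : lattice_terms S) (R : rpd_data V) (B : list (objA V)) :
  is_variety V ->
  (forall A : algebra S, V A -> is_bdl (reduct lt A)) ->
  is_rpd lt R ->
  (forall A : objA V, In A B -> finite_alg (sval A)) ->
  ((forall A : objA V, In A B -> quasi_primal (sval A)) /\
   exists t : term S 3, forall A : objA V, In A B -> is_discriminator (sval A) t)
  <->
  (forall A1 A2 : objA V, In A1 B -> In A2 B ->
   forall (Y : Ob (Xcat R))
          (phi1 : Hom (Dobj R A1) Y) (phi2 : Hom (Dobj R A2) Y),
     jointly_surj (fhom (flat R) phi1) (fhom (flat R) phi2) ->
     disjoint_union (fobj (flat R) Y) (fhom (flat R) phi1) (fhom (flat R) phi2)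
     \/ (surj (fhom (flat R) phi1) /\ surj (fhom (flat R) phi2))).
Proof.
move=> hV hbdl hR hfin; split.
- by move=> [_ ht]; exact: (dir12 lt R B hR ht).
- move=> H2.
  have [l [hl1 hl2]] := pts_list B hfin.
  have pair : forall p q : pts V, In (projT1 p) B -> In (projT1 q) B ->
      exists t, pint t p /\ pint t q.
    move=> [A1 [[x1 y1] z1]] [A2 [[x2 y2] z2]] iA1 iA2.
    have [t [h1 h2]] := pair_interp lt R B hV hbdl hR hfin H2 A1 A2 iA1 iA2 x1 y1 z1 x2 y2 z2.
    by exists t.
  have [t ht] := maj_lemma lt hbdl _ pair _ hl1.
  have dt : forall A, In A B -> is_discriminator (sval A) t.
    move=> A iA x y z; have := ht _ (hl2 A iA x y z).
    rewrite /pint /= /disc; case: excluded_middle_informative => [e|n] ->; split => //.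
  split; last by exists t.
  move=> A iA; split; [exact: hfin|by exists t; apply: dt].
Qed.
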